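(* Let ${\cal I}_1,\dots,{\cal I}_k$ ($k\ge 2$) be nonempty subsets of $E$ and let $\widetilde\lessdot$ be the restriction of $\lessdot$ to the $2k$ handles $\mathrm{LH}({\cal I}_i),\mathrm{UH}({\cal I}_i)$, $i=1,\dots,k$ (assume these $2k$ endpoints are distinct). Then: (i) if the two $\widetilde\lessdot$-smallest handles are lower handles $\mathrm{LH}({\cal I}_i)$ and $\mathrm{LH}({\cal I}_j)$ with $i\ne j$, then no ${\cal I}_t$ is minimal; (ii) if the $\widetilde\lessdot$-smallest handle is $\mathrm{LH}({\cal I}_i)$, then no ${\cal I}_t$ with $t\neq i$ is minimal, and ${\cal I}_i$ is minimal iff no $\mathrm{LH}({\cal I}_j)$ with $j\ne i$ satisfies $\mathrm{LH}({\cal I}_j)\lessdot\mathrm{UH}({\cal I}_i)$; (iii) if $\widetilde\lessdot$ begins with a maximal initial block of upper handles $\mathrm{UH}({\cal I}_{i_1}),\dots,\mathrm{UH}({\cal I}_{i_s})$ ($s\ge1$) followed by the lower handle $\mathrm{LH}({\cal I}_j)$, then each ${\cal I}_{i_1},\dots,{\cal I}_{i_s}$ is minimal, ${\cal I}_j$ is minimal iff no lower handle $\mathrm{LH}({\cal I}_t)$ with $t\ne j$ satisfies $\mathrm{LH}({\cal I}_t)\lessdot\mathrm{UH}({\cal I}_j)$, and no other ${\cal I}_t$ is minimal.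
   Context: Let $E$ be a finite set and for each $a\in E$ let $I_a=(\ell_a,r_a)$ be a nonempty open real interval, $\ell_a<r_a$; define $a\vartriangleleft b$ iff $r_a\le\ell_b$ (an interval order). Let $\lessdot$ be the linear ordering of all endpoints $\ell_a,r_a$ by real value from left to right, where among endpoints with equal real value all right endpoints come first (arbitrary order among them) and then all left endpoints (arbitrary order). For nonempty ${\cal I}_1,{\cal I}_2\subseteq E$, ${\cal I}_1\vartriangleleft{\cal I}_2$ means there exist $a\in{\cal I}_1$, $b\in{\cal I}_2$ with $a\vartriangleleft b$. For nonempty ${\cal I}\subseteq E$, $\mathrm{LH}({\cal I})$ is the $\lessdot$-minimum of $\{r_x:x\in{\cal I}\}$ and $\mathrm{UH}({\cal I})$ is the $\lessdot$-maximum of $\{\ell_x:x\in{\cal I}\}$. Among ${\cal I}_1,\dots,{\cal I}_k$, ${\cal I}_j$ is minimal if there is no $i\ne j$ with ${\cal I}_i\vartriangleleft{\cal I}_j$. *)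

(* Defs.v *)
(* Reals are abstracted as an arbitrary realFieldType R
   (only order comparisons of endpoints are used). *)
From HB Require Import structures.
From mathcomp Require Import all_boot all_order all_algebra.
Set Implicit Arguments. Unset Strict Implicit. Unset Printing Implicit Defensive.
Import Order.TTheory GRing.Theory Num.Theory.
Local Open Scope ring_scope.

(* An endpoint of the interval I_a = (ell a, r a) is a pair (a, b) with
   b = true for the right endpoint r_a and b = false for the left endpoint ell_a. *)
Definition endpoint (E : finType) := (E * bool)%type.

Definition epval (R : realFieldType) (E : finType) (ell r : E -> R)
  (p : endpoint E) : R := if p.2 then r p.1 else ell p.1.

(* The linear order "lessdot" on all endpoints is encoded by an injective rank
   function rk (p lessdot q iff rk p < rk q), which must order endpoints by real
   value, and among endpoints with equal value put all right endpoints before all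
   left endpoints; otherwise the order is arbitrary. *)
Definition lessdot_rank (R : realFieldType) (E : finType) (ell r : E -> R)
  (rk : endpoint E -> nat) : Prop :=
  [/\ injective rk,
      (forall p q, epval ell r p < epval ell r q -> (rk p < rk q)%N) &
      (forall p q, epval ell r p = epval ell r q -> p.2 = true -> q.2 = false ->
                   (rk p < rk q)%N)].

Definition ivl_prec (R : realFieldType) (E : finType) (ell r : E -> R) (a b : E) : Prop :=
  r a <= ell b.

Definition set_prec (R : realFieldType) (E : finType) (ell r : E -> R)
  (I1 I2 : {set E}) : Prop :=
  exists a b, [/\ a \in I1, b \in I2 & ivl_prec ell r a b].

Definition minimal_in (R : realFieldType) (E : finType) (ell r : E -> R)
  (k : nat) (I : 'I_k -> {set E}) (j : 'I_k) : Prop :=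
  ~ exists i, i != j /\ set_prec ell r (I i) (I j).

Definition is_LH (E : finType) (rk : endpoint E -> nat) (A : {set E})
  (p : endpoint E) : Prop :=
  [/\ p.2 = true, p.1 \in A & forall y, y \in A -> (rk p <= rk (y, true))%N].

Definition is_UH (E : finType) (rk : endpoint E -> nat) (A : {set E})
  (p : endpoint E) : Prop :=
  [/\ p.2 = false, p.1 \in A & forall y, y \in A -> (rk (y, false) <= rk p)%N].

(* Main.v *)
Require Import Defs.
From HB Require Import structures.
From mathcomp Require Import all_boot all_order all_algebra.
From mathcomp Require Import zify.
Import Order.TTheory GRing.Theory Num.Theory.
Local Open Scope ring_scope.

Lemma key (R : realFieldType) (E : finType) (ell r : E -> R)
  (rk : endpoint E -> nat) (hrk : lessdot_rank ell r rk) (A B : {set E})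
  (p q : endpoint E) (hp : is_LH rk A p) (hq : is_UH rk B q) :
  set_prec ell r A B <-> (rk p < rk q)%N.
Proof.
case: hrk => rinj rlt req.
case: p hp => pa pb [/= p2 pA pmin]; subst pb.
case: q hq => qa qb [/= q2 qB qmax]; subst qb.
have hpv : forall y, y \in A -> r pa <= r y.
  move=> y yA; rewrite leNgt; apply/negP => H.
  have := rlt (y, true) (pa, true) H. have := pmin y yA. lia.
have hqv : forall y, y \in B -> ell y <= ell qa.
  move=> y yB; rewrite leNgt; apply/negP => H.
  have := rlt (qa, false) (y, false) H. have := qmax y yB. lia.
split.
- case=> [a [b [aA bB hab]]].
  have h : r pa <= ell qa := le_trans (hpv a aA) (le_trans hab (hqv b bB)).
  rewrite le_eqVlt in h; case/orP: h => [/eqP e | lt].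
    exact: (req (pa, true) (qa, false)).
  exact: (rlt (pa, true) (qa, false)).
- move=> H. exists pa, qa; split => //.
  rewrite /ivl_prec leNgt; apply/negP => H'.
  have := rlt (qa, false) (pa, true) H'. lia.
Qed.

Theorem mainTheorem7
  (R : realFieldType) (E : finType) (ell r : E -> R)
  (hI : forall a, ell a < r a)
  (rk : endpoint E -> nat) (hrk : lessdot_rank ell r rk)
  (k : nat) (hk : (2 <= k)%N) (I : 'I_k -> {set E})
  (hne : forall i, I i != set0)
  (LH UH : 'I_k -> endpoint E)
  (hLH : forall i, is_LH rk (I i) (LH i))
  (hUH : forall i, is_UH rk (I i) (UH i))
  (hdistL : injective LH) (hdistU : injective UH) :
  (* (i) *)
  (forall i j, i != j ->
     (forall t, t != i -> t != j -> (rk (LH i) < rk (LH t))%N /\ (rk (LH j) < rk (LH t))%N) ->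
     (forall t, (rk (LH i) < rk (UH t))%N /\ (rk (LH j) < rk (UH t))%N) ->
     forall t, ~ minimal_in ell r I t)
  /\
  (* (ii) *)
  (forall i,
     (forall t, t != i -> (rk (LH i) < rk (LH t))%N) ->
     (forall t, (rk (LH i) < rk (UH t))%N) ->
     (forall t, t != i -> ~ minimal_in ell r I t) /\
     (minimal_in ell r I i <->
        ~ exists j, j != i /\ (rk (LH j) < rk (UH i))%N))
  /\
  (* (iii) *)
  (forall (S : {set 'I_k}) (j : 'I_k),
     S != set0 ->
     (forall t, t != j -> (rk (LH j) < rk (LH t))%N) ->
     (forall t, (t \in S) <-> (rk (UH t) < rk (LH j))%N) ->
     (forall t, t \in S -> minimal_in ell r I t) /\
     (minimal_in ell r I j <->
        ~ exists t, t != j /\ (rk (LH t) < rk (UH j))%N) /\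
     (forall t, t \notin S -> t != j -> ~ minimal_in ell r I t)).
Proof.
have K : forall t, minimal_in ell r I t <->
    ~ exists s, s != t /\ (rk (LH s) < rk (UH t))%N.
  move=> t; rewrite /minimal_in; split => H [s [st Hs]]; apply: H; exists s;
    split => //.
    exact: ((@key _ _ _ _ _ hrk _ _ _ _ (hLH s) (hUH t)).2 Hs).
  exact: ((@key _ _ _ _ _ hrk _ _ _ _ (hLH s) (hUH t)).1 Hs).
split; [|split].
- move=> i j ij HL HU t /K; apply.
  case: (eqVneq t i) => [-> | ti].
    by exists j; split; [rewrite eq_sym | case: (HU i)].
  by exists i; split; [rewrite eq_sym|case: (HU t)].
- move=> i HL HU; split; last exact: K.
  by move=> t ti /K; apply; exists i; split; [rewrite eq_sym|apply: HU].
- move=> S j _ HL HS; split; [|split].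
  + move=> t tS; apply/K => -[s [st Hs]].
    have := (HS t).1 tS.
    case: (eqVneq s j) => [e | sj]; first by subst s; lia.
    have := HL s sj; lia.
  + exact: K.
  + move=> t tS tj /K; apply; exists j; split; first by rewrite eq_sym.
    have h1 : ~ (rk (UH t) < rk (LH j))%N by move/HS; apply/negP.
    have h2 : rk (UH t) <> rk (LH j).
      case: hrk => rinj _ _ /rinj e.
      case: (hUH t) => u2 _ _; case: (hLH j) => l2 _ _.
      by move: u2; rewrite e l2.
    lia.
Qed.
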